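(* If $T$ is a subcubic tree of order $n$ and dissociation number $\psi$, then $\Phi(T)\le 1.466^{4n-5\psi+2}$.
   Context: All graphs are finite, simple and undirected. A subcubic tree is a tree of maximum degree at most $3$. A dissociation set in a graph $G$ is a vertex subset $F$ such that the induced subgraph $G[F]$ has maximum degree at most $1$; a maximum dissociation set is one of maximum cardinality, and the dissociation number $\psi(G)$ is that cardinality. $\Phi(G)$ denotes the number of maximum dissociation sets of $G$. *)

(* Defs.v *)
From mathcomp Require Import all_boot all_order all_algebra.
Set Implicit Arguments. Unset Strict Implicit. Unset Printing Implicit Defensive.

Definition simple_graph (T : finType) (e : rel T) : Prop :=
  symmetric e /\ irreflexive e.

Definition nedges (T : finType) (e : rel T) : nat :=
  #|[set p : T * T | e p.1 p.2]| %/ 2.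

Definition is_tree (T : finType) (e : rel T) : Prop :=
  simple_graph e /\ 0 < #|T| /\ (forall x y, connect e x y) /\
  nedges e = #|T| - 1.

Definition degree (T : finType) (e : rel T) (v : T) : nat := #|[set u | e v u]|.

Definition subcubic (T : finType) (e : rel T) : Prop :=
  forall v, degree e v <= 3.

Definition dissociation (T : finType) (e : rel T) (F : {set T}) : bool :=
  [forall v in F, #|[set u in F | e v u]| <= 1].

Definition psi (T : finType) (e : rel T) : nat :=
  \max_(F : {set T} | dissociation e F) #|F|.

Definition Phi (T : finType) (e : rel T) : nat :=
  #|[set F : {set T} | dissociation e F & #|F| == psi e]|.

(* Main.v *)
Require Import Defs.
From mathcomp Require Import all_boot all_order all_algebra.
From mathcomp Require Import zify ring lra.
Import Order.TTheory GRing.Theory Num.Theory.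
Set Implicit Arguments. Unset Strict Implicit. Unset Printing Implicit Defensive.

Definition nb (T : finType) (e : rel T) (S : {set T}) (v : T) := [set u in S | e v u].
Definition dg (T : finType) (e : rel T) (S : {set T}) (v : T) := #|nb e S v|.
Definition MM (T : finType) (e : rel T) (S : {set T}) := \sum_(v in S) dg e S v.
Definition dissS (T : finType) (e : rel T) (S F : {set T}) := (F \subset S) && dissociation e F.
Definition psiS (T : finType) (e : rel T) (S : {set T}) := \max_(F : {set T} | dissS e S F) #|F|.
Definition cnt (T : finType) (e : rel T) (S : {set T}) (s : nat) :=
  #|[set F : {set T} | dissS e S F & #|F| == s]|.
Definition PhiS (T : finType) (e : rel T) (S : {set T}) := cnt e S (psiS e S).

Lemma dissP (T : finType) (e : rel T) (F : {set T}) :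
  reflect (forall v, v \in F -> #|nb e F v| <= 1) (dissociation e F).
Proof. exact: (iffP forall_inP). Qed.

Lemma diss_sub (T : finType) (e : rel T) (F G : {set T}) :
  F \subset G -> dissociation e G -> dissociation e F.
Proof.
move=> sFG /dissP dG; apply/dissP => v vF.
apply: leq_trans (dG v (subsetP sFG v vF)).
apply: subset_leq_card; apply/subsetP => u; rewrite !inE => /andP[uF ->].
by rewrite (subsetP sFG u uF).
Qed.

Lemma diss_bad (T : finType) (e : rel T) (F : {set T}) v a b :
  dissociation e F -> v \in F -> a \in F -> b \in F -> a != b -> e v a -> e v b -> False.
Proof.
move=> /dissP dF vF aF bF ab eva evb.
have := dF v vF.
have : [set a; b] \subset nb e F v.
  by apply/subsetP => u; rewrite !inE => /orP[] /eqP ->; rewrite ?aF ?bF ?eva ?evb.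
move/subset_leq_card; rewrite cards2 ab => h1 h2.
by have := leq_trans h1 h2.
Qed.

Lemma diss_union (T : finType) (e : rel T) (D P : {set T}) :
  symmetric e -> dissociation e D -> dissociation e P ->
  (forall a b, a \in P -> b \in D -> ~~ e a b) -> dissociation e (D :|: P).
Proof.
move=> se /dissP dD /dissP dP noe; apply/dissP => v; rewrite inE => /orP[vD|vP].
  apply: leq_trans (dD v vD); apply: subset_leq_card; apply/subsetP => u.
  rewrite !inE => /andP[/orP[uD|uP] evu]; first by rewrite uD.
  by move: (noe u v uP vD); rewrite se evu.
apply: leq_trans (dP v vP); apply: subset_leq_card; apply/subsetP => u.
rewrite !inE => /andP[/orP[uD|uP] evu]; last by rewrite uP.
by move: (noe v u vP uD); rewrite evu.
Qed.

Lemma diss_pair (T : finType) (e : rel T) a b :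
  irreflexive e -> dissociation e [set a; b].
Proof.
move=> ie; apply/dissP => v vin.
apply: leq_trans (_ : #|[set a; b] :\ v| <= 1).
  apply: subset_leq_card; apply/subsetP => u; rewrite !inE => /andP[-> evu].
  by rewrite andbT; apply/eqP => uv; move: evu; rewrite uv ie.
have h := cardsD1 v [set a; b]; rewrite vin cards2 in h.
by move: h; case: (a != b) => /= h; lia.
Qed.

Lemma diss_set0 (T : finType) (e : rel T) : dissociation e set0.
Proof. by apply/dissP => v; rewrite inE. Qed.

Lemma psi_ub (T : finType) (e : rel T) S F : dissS e S F -> #|F| <= psiS e S.
Proof. by move=> h; apply: (leq_bigmax_cond F h). Qed.

Lemma psi_att (T : finType) (e : rel T) S : exists2 F, dissS e S F & #|F| = psiS e S.
Proof.
have h0 : dissS e S set0 by rewrite /dissS sub0set diss_set0.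
have hc : 0 < #|[pred F : {set T} | dissS e S F]|.
  by apply/card_gt0P; exists set0.
have [F hF E] := @eq_bigmax_cond _ (fun F : {set T} => dissS e S F) (fun F => #|F|) hc.
by exists F => //; rewrite /psiS E.
Qed.

Lemma card_setseq (T : finType) (s : seq T) : uniq s -> #|[set:: s]| = size s.
Proof. by move=> us; rewrite cardsE; apply/card_uniqP. Qed.

Lemma card_setseqI (T : finType) (s : seq T) (F : {set T}) : uniq s ->
  #|F :&: [set:: s]| = count (fun y => y \in F) s.
Proof.
move=> us.
have -> : F :&: [set:: s] = [set:: [seq y <- s | y \in F]].
  by apply/setP => y; rewrite !inE mem_filter.
by rewrite card_setseq ?filter_uniq // size_filter.
Qed.

Lemma cnt0 (T : finType) (e : rel T) S s : psiS e S < s -> cnt e S s = 0.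
Proof.
move=> lt; apply/eqP; rewrite cards_eq0; apply/eqP/setP => F; rewrite !inE.
apply/negP => /andP[dF /eqP sF].
by have := psi_ub dF; rewrite sF leqNgt lt.
Qed.

Lemma pat_bound (T : finType) (e : rel T) (S Q P : {set T}) :
  symmetric e -> P \subset S -> P \subset Q -> dissociation e P ->
  (forall a u, a \in P -> u \in S -> e a u -> u \in Q) ->
  psiS e (S :\: Q) + #|P| <= psiS e S.
Proof.
move=> se PS PQ dP hP.
have [D /andP[DS dD] <-] := psi_att e (S :\: Q).
have dj : D :&: P = set0.
  apply/setP => y; rewrite !inE; apply/negP => /andP[yD yP].
  by move: (subsetP DS y yD) (subsetP PQ y yP); rewrite !inE => /andP[/negP].
have -> : #|D| + #|P| = #|D :|: P| by rewrite cardsU dj cards0 subn0.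
apply: psi_ub; rewrite /dissS subUset (subset_trans DS (subsetDl S Q)) PS /=.
apply: diss_union => // a b aP bD; apply/negP => eab.
move: (subsetP DS b bD); rewrite inE => /andP[/negP nbQ bS].
by apply: nbQ; apply: (hP a b).
Qed.

Lemma max_count (T : finType) (e : rel T) (S Q F : {set T}) k :
  dissS e S F -> #|F| = psiS e S -> psiS e (S :\: Q) + k <= psiS e S ->
  k <= #|F :&: Q|.
Proof.
move=> /andP[FS dF] sF hk.
have h1 : #|F :\: Q| <= psiS e (S :\: Q).
  apply: psi_ub; rewrite /dissS setSD //=.
  by apply: diss_sub dF; apply: subsetDl.
have := cardsID Q F; lia.
Qed.

Definition cls (T : finType) (e : rel T) S (Q : seq T) (bs : seq bool) :=
  [set F : {set T} | dissS e S F & (#|F| == psiS e S) && ([seq y \in F | y <- Q] == bs)].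

Lemma cls_le (T : finType) (e : rel T) S Q bs : uniq Q ->
  #|cls e S Q bs| <= cnt e (S :\: [set:: Q]) (psiS e S - count id bs).
Proof.
move=> uQ.
pose f := fun F : {set T} => F :\: [set:: Q].
have inj : {in cls e S Q bs &, injective f}.
  move=> F1 F2; rewrite !inE => /andP[_ /andP[_ /eqP b1]] /andP[_ /andP[_ /eqP b2]] ef.
  apply/setP => y; case yQ: (y \in Q).
    have hi : index y Q < size Q by rewrite index_mem.
    have h1 := nth_map y false (fun y => y \in F1) hi.
    have h2 := nth_map y false (fun y => y \in F2) hi.
    by rewrite nth_index // in h1 h2; rewrite -h1 -h2 b1 b2.
  have := congr1 (fun A : {set T} => y \in A) ef; rewrite /f !inE yQ /=.
  by [].
rewrite -(card_in_imset inj); apply: subset_leq_card; apply/subsetP => D.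
case/imsetP => F hF ->.
move: hF; rewrite /cls inE => /andP[hd /andP[/eqP sF /eqP bF]].
move: (hd) => /andP[FS dF].
rewrite inE /dissS setSD //= (diss_sub _ dF) ?subsetDl //=.
have := cardsID [set:: Q] F; rewrite card_setseqI // -sF.
have -> : count (fun y => y \in F) Q = count id bs.
  by rewrite -bF count_map.
by move=> <-; rewrite addKn.
Qed.

Lemma card_bigcup_le (X : finType) (Cs : seq {set X}) :
  #|\bigcup_(C <- Cs) C| <= \sum_(C <- Cs) #|C|.
Proof.
elim: Cs => [|C Cs IH]; first by rewrite !big_nil cards0.
rewrite !big_cons; apply: leq_trans (leq_add (leqnn _) IH).
by rewrite cardsU leq_subr.
Qed.

Lemma Phi_cover (T : finType) (e : rel T) S (L : seq (seq T * seq bool)) :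
  (forall qb, qb \in L -> uniq qb.1) ->
  (forall F, dissS e S F -> #|F| = psiS e S ->
     has (fun qb => [seq y \in F | y <- qb.1] == qb.2) L) ->
  PhiS e S <= \sum_(qb <- L) cnt e (S :\: [set:: qb.1]) (psiS e S - count id qb.2).
Proof.
move=> uL hL.
apply: (@leq_trans (\sum_(qb <- L) #|cls e S qb.1 qb.2|)); last first.
  rewrite big_seq_cond [X in _ <= X]big_seq_cond; apply: leq_sum => qb.
  by rewrite andbT => /uL; apply: cls_le.
apply: (@leq_trans #|\bigcup_(C <- [seq cls e S qb.1 qb.2 | qb <- L]) C|); last first.
  by apply: leq_trans (card_bigcup_le _) _; rewrite big_map.
apply: subset_leq_card; apply/subsetP => F; rewrite inE => /andP[dF /eqP sF].
have /hasP[qb qbL hb] := hL F dF sF.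
rewrite big_map (big_rem qb) //= inE; apply/orP; left.
by rewrite inE dF sF eqxx hb.
Qed.

Lemma card_sumB (T : finType) (B : {set T}) (P : pred T) :
  #|[set u in B | P u]| = \sum_(u in B) P u.
Proof.
rewrite -sum1_card big_mkcond [RHS]big_mkcond /=; apply: eq_bigr => u _.
by rewrite !inE; case: (u \in B); case: (P u).
Qed.

Lemma dg_split (T : finType) (e : rel T) (B Q : {set T}) v :
  dg e B v = dg e (B :\: Q) v + dg e (B :&: Q) v.
Proof.
rewrite /dg -(cardsID Q (nb e B v)) addnC; congr (_ + _); apply: eq_card => u;
  rewrite !inE; by case: (u \in Q) (u \in B) (e v u) => [] [] [].
Qed.

Lemma X_sym (T : finType) (e : rel T) (A B : {set T}) : symmetric e ->
  \sum_(v in A) dg e B v = \sum_(v in B) dg e A v.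
Proof.
move=> se; rewrite /dg /nb.
under eq_bigr do rewrite card_sumB.
under [RHS]eq_bigr do rewrite card_sumB.
rewrite exchange_big /=; apply: eq_bigr => u _; apply: eq_bigr => v _.
by rewrite se.
Qed.

Lemma MM_split (T : finType) (e : rel T) (S Q : {set T}) :
  symmetric e -> Q \subset S ->
  MM e S + MM e Q = MM e (S :\: Q) + 2 * \sum_(y in Q) dg e S y.
Proof.
move=> se QS.
have SQ : S :&: Q = Q by apply/setIidPr.
have h1 : \sum_(v in S) dg e S v = \sum_(v in S :\: Q) dg e S v + \sum_(v in Q) dg e S v.
  by rewrite (big_setID Q) /= SQ addnC.
have h2 : forall A : {set T}, \sum_(v in A) dg e S v =
     \sum_(v in A) dg e (S :\: Q) v + \sum_(v in A) dg e Q v.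
  move=> A; rewrite -big_split /=; apply: eq_bigr => v _.
  by rewrite (dg_split e S Q) SQ.
rewrite /MM h1 !h2 (X_sym (S :\: Q) Q se).
lia.
Qed.

Local Open Scope ring_scope.

Definition cc : rat := locked (1466%:Q / 1000%:Q).
Definition BB (z : int) : rat := cc ^ z.

Lemma cc_gt1 : 1 < cc.
Proof. rewrite /cc -lock; lra. Qed.
Lemma cc_gt0 : 0 < cc. Proof. exact: lt_trans ltr01 cc_gt1. Qed.
Lemma BB_gt0 z : 0 < BB z.
Proof. exact: exprz_gt0 cc_gt0. Qed.
Lemma BB_mono z1 z2 : (z1 <= z2)%R -> BB z1 <= BB z2.
Proof. move=> h. apply: ler_weXz2l. exact: ltW cc_gt1. exact: h. Qed.
Lemma BB_shift z (k : nat) : BB (z + k%:Z) = BB z * cc ^+ k.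
Proof. rewrite /BB expfzDr. by []. exact: lt0r_neq0 cc_gt0. Qed.

Lemma cpoly : cc ^+ 3 + cc ^+ 1 <= cc ^+ 4.
Proof. rewrite /cc -lock; lra. Qed.
Lemma cpoly2 : cc ^+ 2 + cc ^+ 1 + cc ^+ 0 <= cc ^+ 4.
Proof. rewrite /cc -lock; lra. Qed.
Lemma cpoly3 : cc ^+ 2 + cc ^+ 0 + cc ^+ 0 <= cc ^+ 4.
Proof. rewrite /cc -lock; lra. Qed.

Lemma num_a z : BB (z + 3%:Z) + BB (z + 1%:Z) <= BB (z + 4%:Z).
Proof.
have y0 := BB_gt0 z.
rewrite !BB_shift -mulrDr (ler_pM2l y0).
exact: cpoly.
Qed.

Lemma num_b z : BB (z + 2%:Z) + BB (z + 1%:Z) + BB (z + 0%:Z) <= BB (z + 4%:Z).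
Proof.
have y0 := BB_gt0 z.
rewrite !BB_shift -!mulrDr (ler_pM2l y0).
exact: cpoly2.
Qed.

Lemma num_c z : BB (z + 2%:Z) + BB (z + 0%:Z) + BB (z + 0%:Z) <= BB (z + 4%:Z).
Proof.
have y0 := BB_gt0 z.
rewrite !BB_shift -!mulrDr (ler_pM2l y0).
exact: cpoly3.
Qed.

Lemma fin_c (m a1 a2 a3 : int) : a1 <= m - 2 -> a2 <= m - 4 -> a3 <= m - 4 ->
  BB a1 + (BB a2 + (BB a3 + 0)) <= BB m.
Proof.
move=> h1 h2 h3; rewrite addr0 addrA.
apply: le_trans (le_trans (num_c (m - 4)) (BB_mono _)); last by lia.
apply: lerD; first apply: lerD; apply: BB_mono; lia.
Qed.

Lemma fin_b (m a1 a2 a3 : int) : a1 <= m - 2 -> a2 <= m - 3 -> a3 <= m - 4 ->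
  BB a1 + (BB a2 + (BB a3 + 0)) <= BB m.
Proof.
move=> h1 h2 h3; rewrite addr0 addrA.
apply: le_trans (le_trans (num_b (m - 4)) (BB_mono _)); last by lia.
apply: lerD; first apply: lerD; apply: BB_mono; lia.
Qed.

Lemma fin_a (m a1 a2 : int) : a1 <= m - 1 -> a2 <= m - 3 ->
  BB a1 + (BB a2 + 0) <= BB m.
Proof.
move=> h1 h2; rewrite addr0.
apply: le_trans (le_trans (num_a (m - 4)) (BB_mono _)); last by lia.
apply: lerD; apply: BB_mono; lia.
Qed.

Lemma fin_1 (m a1 : int) : a1 <= m -> BB a1 + 0 <= BB m.
Proof. by move=> h1; rewrite addr0; apply: BB_mono. Qed.

Local Close Scope ring_scope.

Definition mu (T : finType) (e : rel T) (S : {set T}) : int :=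
  (6 * #|S|)%:Z - (MM e S)%:Z - (5 * psiS e S)%:Z.

Definition dfc (T : finType) (e : rel T) (S : {set T}) (Q : seq T) : int :=
  (6 * size Q + MM e [set:: Q])%:Z - (2 * \sum_(y <- Q) dg e S y)%:Z.

Definition IHP (T : finType) (e : rel T) (S : {set T}) :=
  forall S' : {set T}, #|S'| < #|S| -> ((PhiS e S')%:R <= BB (mu e S'))%R.

Lemma sub_bound (T : finType) (e : rel T) (S : {set T}) (Q : seq T) j :
  symmetric e -> IHP e S -> uniq Q -> Q != [::] -> [set:: Q] \subset S ->
  psiS e (S :\: [set:: Q]) + j <= psiS e S ->
  ((cnt e (S :\: [set:: Q]) (psiS e S - j))%:R <= BB (mu e S - dfc e S Q + (5 * j)%:Z))%R.
Proof.
move=> se IH uQ Qn QS hp.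
set S' := S :\: [set:: Q].
have [lt|ge] := ltnP (psiS e S') (psiS e S - j).
  by rewrite cnt0 //; apply: ltW; exact: BB_gt0.
have eq : psiS e S' = psiS e S - j by apply/eqP; rewrite eqn_leq ge -(leq_add2r j) subnK ?hp //; lia.
rewrite -eq.
have cS : #|S'| < #|S|.
  rewrite /S' -(cardsID [set:: Q] S) (setIidPr QS) card_setseq //.
  by case: Q Qn uQ {QS hp S' ge eq} => //= a l _ _; lia.
apply: le_trans (IH _ cS) _; apply: BB_mono; rewrite le_eqVlt; apply/orP; left; apply/eqP.
have hM := MM_split se QS.
have hC := cardsID [set:: Q] S; rewrite (setIidPr QS) card_setseq // in hC.
have hs : \sum_(y in [set:: Q]) dg e S y = \sum_(y <- Q) dg e S y.
  by rewrite (big_uniq _ uQ); apply: eq_bigl => y; rewrite inE.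
rewrite hs in hM.
have hj : j <= psiS e S by move: hp; lia.
rewrite /mu /dfc eq /S'; lia.
Qed.

Lemma engine (T : finType) (e : rel T) (S : {set T}) (L : seq (seq T * seq bool)) :
  symmetric e -> IHP e S ->
  (forall qb, qb \in L -> [/\ uniq qb.1, qb.1 != [::], [set:: qb.1] \subset S &
        psiS e (S :\: [set:: qb.1]) + count id qb.2 <= psiS e S]) ->
  (forall F, dissS e S F -> #|F| = psiS e S ->
     has (fun qb => [seq y \in F | y <- qb.1] == qb.2) L) ->
  ((PhiS e S)%:R <= \sum_(qb <- L) BB (mu e S - dfc e S qb.1 + (5 * count id qb.2)%:Z))%R.
Proof.
move=> se IH hL hc.
have h := Phi_cover (fun qb q => let: And4 u _ _ _ := hL qb q in u) hc.
rewrite -(ler_nat rat) in h.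
apply: le_trans h _.
rewrite natr_sum big_seq_cond [X in (_ <= X)%R]big_seq_cond; apply: ler_sum => qb.
rewrite andbT => qL; have [u n s p] := hL qb qL.
exact: sub_bound.
Qed.

Lemma nb_mem (T : finType) (e : rel T) S v N u :
  nb e S v = N -> u \in N -> (u \in S) && e v u.
Proof. by move=> <-; rewrite inE. Qed.

Lemma nb_in (T : finType) (e : rel T) S v N u :
  nb e S v = N -> u \in S -> e v u -> u \in N.
Proof. by move=> <- uS evu; rewrite inE uS. Qed.

Lemma diss_by (T : finType) (e : rel T) (P : {set T}) (g : T -> T) :
  (forall a u, a \in P -> u \in P -> e a u -> u = g a) -> dissociation e P.
Proof.
move=> h; apply/dissP => a aP.
apply: leq_trans (_ : #|[set g a]| <= 1); last by rewrite cards1.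
apply: subset_leq_card; apply/subsetP => u; rewrite !inE => /andP[uP eau].
by rewrite (h a u aP uP eau).
Qed.

Lemma dg_ge (T : finType) (e : rel T) (B A : {set T}) y :
  (forall u, u \in A -> (u \in B) && e y u) -> #|A| <= dg e B y.
Proof.
move=> h; apply: subset_leq_card; apply/subsetP => u uA.
by rewrite inE; apply: h.
Qed.

Lemma setseq_sub (T : finType) (Q : seq T) (S : {set T}) :
  all (fun y => y \in S) Q -> [set:: Q] \subset S.
Proof. by move=> /allP h; apply/subsetP => y; rewrite inE => /h. Qed.

Lemma pbs (T : finType) (e : rel T) (S : {set T}) (Q ps : seq T) :
  symmetric e -> uniq ps -> all (fun y => y \in S) ps -> all (fun y => y \in Q) ps ->
  dissociation e [set:: ps] -> all (fun a => nb e S a \subset [set:: Q]) ps ->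
  psiS e (S :\: [set:: Q]) + size ps <= psiS e S.
Proof.
move=> se ups pS /allP pQ dP /allP hn.
rewrite -card_setseq //; apply: pat_bound => //.
- exact: setseq_sub.
- by apply/subsetP => y; rewrite !inE => /pQ.
- move=> a u; rewrite inE => /hn /subsetP h uS eau.
  by have := h u; rewrite !inE uS eau => /(_ isT).
Qed.

Lemma maxc (T : finType) (e : rel T) (S F : {set T}) (Q ps : seq T) :
  symmetric e -> uniq Q -> uniq ps -> all (fun y => y \in S) ps -> all (fun y => y \in Q) ps ->
  dissociation e [set:: ps] -> all (fun a => nb e S a \subset [set:: Q]) ps ->
  dissS e S F -> #|F| = psiS e S ->
  size ps <= count (fun y => y \in F) Q.
Proof.
move=> se uQ ups pS pQ dP hn dF sF.
rewrite -card_setseqI //; apply: max_count dF sF _.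
exact: pbs.
Qed.

Lemma MM_seq (T : finType) (e : rel T) (Q : seq T) :
  uniq Q -> MM e [set:: Q] = \sum_(y <- Q) dg e [set:: Q] y.
Proof. by move=> uQ; rewrite /MM (big_uniq _ uQ); apply: eq_bigl => y; rewrite inE. Qed.

Lemma dg_nb (T : finType) (e : rel T) (S B : {set T}) y :
  nb e S y \subset B -> dg e S y <= dg e B y.
Proof.
move=> h; apply: subset_leq_card; apply/subsetP => u uN.
by have := subsetP h u uN; move: uN; rewrite !inE => /andP[_ ->] ->.
Qed.

Lemma dg_le3 (T : finType) (e : rel T) (S : {set T}) y :
  (forall v, #|[set u | e v u]| <= 3) -> dg e S y <= 3.
Proof.
move=> h; apply: leq_trans (h y); apply: subset_leq_card; apply/subsetP => u.
by rewrite !inE => /andP[].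
Qed.

Lemma cards3 (T : finType) (a b c : T) :
  a != b -> a != c -> b != c -> #|[set a; b; c]| = 3.
Proof.
move=> ab ac bc; rewrite -setUA cardsU1 cards2 bc !inE negb_or ab ac.
by [].
Qed.

Lemma nbE (T : finType) (e : rel T) S v N u :
  nb e S v = N -> (u \in N) = (u \in S) && e v u.
Proof. by move=> <-; rewrite inE. Qed.

Lemma in_nb (T : finType) (e : rel T) S v N u :
  nb e S v = N -> u \in N -> u \in S.
Proof. by move=> h /(nb_mem h) /andP[]. Qed.

Lemma adj_nb (T : finType) (e : rel T) S v N u :
  nb e S v = N -> u \in N -> e v u.
Proof. by move=> h /(nb_mem h) /andP[]. Qed.

Lemma nb_eq (T : finType) (e : rel T) S v N u :
  nb e S v = N -> u \in S -> e v u -> u \in N.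
Proof. by move=> h uS evu; rewrite (nbE _ h) uS evu. Qed.

Lemma adj_neq (T : finType) (e : rel T) u v : irreflexive e -> e u v -> u != v.
Proof. by move=> ie euv; apply/eqP => h; move: euv; rewrite h ie. Qed.

Lemma pair_diss (T : finType) (e : rel T) a b :
  irreflexive e -> dissociation e [set:: [:: a; b]].
Proof.
move=> ie; have -> : [set:: [:: a; b]] = [set a; b] by apply/setP => y; rewrite !inE.
exact: diss_pair.
Qed.

Ltac absdg := repeat match goal with |- context [@dg ?T ?e ?B ?y] =>
  let d := fresh "d" in set d := @dg T e B y; clearbody d end.

Ltac finl := absdg;
  repeat match goal with |- context [@mu ?T ?e ?S] =>
    let m := fresh "m" in set m := @mu T e S; clearbody m end;
  repeat match goal with H : _ |- _ => clear H end; lia.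

Lemma bad3 (T : finType) (e : rel T) (F : {set T}) x a b :
  dissociation e F -> e x a -> e x b -> a != b -> ~~ [&& x \in F, a \in F & b \in F].
Proof.
move=> dF ea eb ab; apply/negP => /and3P[xF aF bF].
exact: (diss_bad dF xF aF bF ab ea eb).
Qed.

Lemma condQ (T : finType) (e : rel T) (S : {set T}) (Q : seq T) k (bs : seq bool) :
  uniq Q -> Q != [::] -> all (fun y => y \in S) Q ->
  psiS e (S :\: [set:: Q]) + k <= psiS e S -> count id bs = k ->
  [/\ uniq Q, Q != [::], [set:: Q] \subset S &
        psiS e (S :\: [set:: Q]) + count id bs <= psiS e S].
Proof. by move=> uQ Qn QS hp hc; rewrite hc; split => //; apply: setseq_sub. Qed.

Lemma dissSd (T : finType) (e : rel T) (S F : {set T}) : dissS e S F -> dissociation e F.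
Proof. by case/andP. Qed.

Lemma single_diss (T : finType) (e : rel T) a :
  irreflexive e -> dissociation e [set:: [:: a]].
Proof.
move=> ie; apply: (@diss_by _ _ _ id) => b u; rewrite !inE => /eqP -> /eqP ->.
by rewrite ie.
Qed.

Lemma no_edge (T : finType) (e : rel T) S a N b :
  nb e S a = N -> b \in S -> b \notin N -> ~~ e a b.
Proof. by move=> h bS; apply: contra => eab; rewrite (nbE _ h) bS. Qed.

Lemma setseq_cat (T : finType) (s1 s2 : seq T) : [set:: s1 ++ s2] = [set:: s1] :|: [set:: s2].
Proof. by apply/setP => y; rewrite !inE mem_cat. Qed.

Lemma cards3_le (T : finType) (a b c : T) : #|[set a; b; c]| <= 3.
Proof.
rewrite -setUA cardsU1 cards2.
by case: (a \notin _); case: (b != c).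
Qed.

Lemma case0 (T : finType) (e : rel T) (S : {set T}) v :
  symmetric e -> irreflexive e -> IHP e S -> v \in S -> nb e S v = set0 ->
  ((PhiS e S)%:R <= BB (mu e S))%R.
Proof.
move=> se ie IH vS hv.
have dP : dissociation e [set:: [:: v]].
  by apply: (@diss_by _ _ _ id) => a u; rewrite !inE => /eqP -> /eqP ->; rewrite ie.
have hn : all (fun a => nb e S a \subset [set:: [:: v]]) [:: v].
  by rewrite /= hv sub0set.
have hps := @pbs _ e S [:: v] [:: v] se isT (introT andP (conj vS isT)) (introT andP (conj (mem_head _ _) isT)) dP hn.
apply: (le_trans (@engine _ e S [:: ([:: v], [:: true])] se IH _ _)).
- move=> qb; rewrite inE => /eqP -> /=; split => //.
  by apply: setseq_sub; rewrite /= vS.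
- move=> F dF sF.
  have := maxc (Q := [:: v]) (ps := [:: v]) se isT isT (introT andP (conj vS isT)) (introT andP (conj (mem_head _ _) isT)) dP hn dF sF.
  by rewrite /=; case: (v \in F).
rewrite big_cons big_nil addr0; apply: BB_mono.
rewrite /dfc /= MM_seq // !big_cons !big_nil /=.
have : dg e S v = 0 by rewrite /dg hv cards0.
lia.
Qed.

Ltac memt := rewrite /= ?inE ?eqxx ?orbT ?andbT //=.

Lemma case1 (T : finType) (e : rel T) (S : {set T}) u v :
  symmetric e -> irreflexive e -> IHP e S ->
  nb e S u = [set v] -> nb e S v = [set u] ->
  ((PhiS e S)%:R <= BB (mu e S))%R.
Proof.
move=> se ie IH hu hv.
have vS := in_nb hu (set11 v); have uS := in_nb hv (set11 u).
have euv := adj_nb hu (set11 v); have uv := adj_neq ie euv.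
pose Q := [:: u; v].
have uQ : uniq Q by rewrite /= inE uv.
have QS : all (fun y => y \in S) Q by memt; rewrite uS vS.
have QQ : all (fun y => y \in Q) Q by memt.
have dP : dissociation e [set:: Q] by apply: pair_diss.
have hn : all (fun a => nb e S a \subset [set:: Q]) Q.
  by rewrite /= hu hv !sub1set !inE !eqxx ?orbT.
have hps := pbs se uQ QS QQ dP hn.
apply: (le_trans (@engine _ e S [:: (Q, [:: true; true])] se IH _ _)).
- move=> qb; rewrite inE => /eqP -> /=; split => //.
  exact: setseq_sub.
- move=> F dF sF.
  have := maxc se uQ uQ QS QQ dP hn dF sF.
  by rewrite /=; case: (u \in F); case: (v \in F).
rewrite big_cons big_nil addr0; apply: BB_mono.
rewrite /dfc /= MM_seq // !big_cons !big_nil /=.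
have d1 : dg e S u = 1 by rewrite /dg hu cards1.
have d2 : dg e S v = 1 by rewrite /dg hv cards1.
have m1 : dg e S u <= dg e [set:: Q] u by apply: dg_nb; rewrite hu sub1set !inE eqxx orbT.
have m2 : dg e S v <= dg e [set:: Q] v by apply: dg_nb; rewrite hv sub1set !inE eqxx.
move: d1 d2 m1 m2; absdg; lia.
Qed.

Lemma case2a (T : finType) (e : rel T) (S : {set T}) x v v' :
  symmetric e -> irreflexive e -> IHP e S ->
  nb e S v = [set x] -> nb e S v' = [set x] -> nb e S x = [set v; v'] -> v != v' ->
  ((PhiS e S)%:R <= BB (mu e S))%R.
Proof.
move=> se ie IH hv hv' hx vv'.
have xS := in_nb hv (set11 x).
have vS : v \in S by apply: (in_nb hx); rewrite !inE eqxx.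
have v'S : v' \in S by apply: (in_nb hx); rewrite !inE eqxx orbT.
have exv : e x v by apply: (adj_nb hx); rewrite !inE eqxx.
have exv' : e x v' by apply: (adj_nb hx); rewrite !inE eqxx orbT.
have xv := adj_neq ie exv; have xv' := adj_neq ie exv'.
set Q := [:: x; v; v']; set ps := [:: v; v'].
have uQ : uniq Q by rewrite /= !inE negb_or xv xv' vv'.
have ups : uniq ps by rewrite /= !inE vv'.
have QS : all (fun y => y \in S) Q by rewrite /= xS vS v'S.
have psS : all (fun y => y \in S) ps by rewrite /= vS v'S.
have psQ : all (fun y => y \in Q) ps by rewrite /= !inE !eqxx !orbT.
have dP : dissociation e [set:: ps] by apply: pair_diss.
have hn : all (fun a => nb e S a \subset [set:: Q]) ps.
  by rewrite /= hv hv' !sub1set !inE !eqxx.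
have hps := pbs se ups psS psQ dP hn.
apply: (le_trans (@engine _ e S [:: (Q, [:: false; true; true]); (Q, [:: true; true; false]);
   (Q, [:: true; false; true])] se IH _ _)).
- by move=> qb; rewrite !inE => /or3P[] /eqP -> ; apply: (condQ (k := size ps)).
- move=> F dF sF.
  have hc := maxc se uQ ups psS psQ dP hn dF sF.
  have b1 := bad3 (dissSd dF) exv exv' vv'.
  move: hc b1; rewrite /=.
  by case: (x \in F); case: (v \in F); case: (v' \in F).
rewrite !big_cons big_nil.
have d1 : dg e S v = 1 by rewrite /dg hv cards1.
have d2 : dg e S v' = 1 by rewrite /dg hv' cards1.
have d3 : dg e S x = 2 by rewrite /dg hx cards2 vv'.
have m1 : dg e S v <= dg e [set:: Q] v by apply: dg_nb; rewrite hv sub1set !inE eqxx.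
have m2 : dg e S v' <= dg e [set:: Q] v' by apply: dg_nb; rewrite hv' sub1set !inE eqxx.
have m3 : dg e S x <= dg e [set:: Q] x.
  by apply: dg_nb; rewrite hx subUset !sub1set !inE !eqxx !orbT.
apply: fin_c; rewrite /dfc /= MM_seq // !big_cons !big_nil /=;
  move: d1 d2 d3 m1 m2 m3; finl.
Qed.

Lemma case2b (T : finType) (e : rel T) (S : {set T}) x v v' w :
  symmetric e -> irreflexive e -> (forall y, #|[set u | e y u]| <= 3) -> IHP e S ->
  nb e S v = [set x] -> nb e S v' = [set x] -> nb e S x = [set v; v'; w] ->
  v != v' -> v != w -> v' != w ->
  ((PhiS e S)%:R <= BB (mu e S))%R.
Proof.
move=> se ie cub IH hv hv' hx vv' vw v'w.
have xS := in_nb hv (set11 x).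
have vS : v \in S by apply: (in_nb hx); rewrite !inE eqxx.
have v'S : v' \in S by apply: (in_nb hx); rewrite !inE eqxx !orbT.
have wS : w \in S by apply: (in_nb hx); rewrite !inE eqxx !orbT.
have exv : e x v by apply: (adj_nb hx); rewrite !inE eqxx.
have exv' : e x v' by apply: (adj_nb hx); rewrite !inE eqxx !orbT.
have exw : e x w by apply: (adj_nb hx); rewrite !inE eqxx !orbT.
have xv := adj_neq ie exv; have xv' := adj_neq ie exv'; have xw := adj_neq ie exw.
set Q1 := [:: x; v; v']; set Q2 := [:: x; v; v'; w]; set ps := [:: v; v'].
have uQ1 : uniq Q1 by rewrite /= !inE negb_or xv xv' vv'.
have uQ2 : uniq Q2 by rewrite /= !inE !negb_or xv xv' xw vv' vw v'w.
have ups : uniq ps by rewrite /= !inE vv'.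
have Q1S : all (fun y => y \in S) Q1 by rewrite /= xS vS v'S.
have Q2S : all (fun y => y \in S) Q2 by rewrite /= xS vS v'S wS.
have psS : all (fun y => y \in S) ps by rewrite /= vS v'S.
have psQ1 : all (fun y => y \in Q1) ps by rewrite /= !inE !eqxx !orbT.
have psQ2 : all (fun y => y \in Q2) ps by rewrite /= !inE !eqxx !orbT.
have dP : dissociation e [set:: ps] by apply: pair_diss.
have hn1 : all (fun a => nb e S a \subset [set:: Q1]) ps.
  by rewrite /= hv hv' !sub1set !inE !eqxx.
have hn2 : all (fun a => nb e S a \subset [set:: Q2]) ps.
  by rewrite /= hv hv' !sub1set !inE !eqxx.
have hps1 := pbs se ups psS psQ1 dP hn1.
have hps2 := pbs se ups psS psQ2 dP hn2.
apply: (le_trans (@engine _ e S [:: (Q1, [:: false; true; true]); (Q2, [:: true; true; false; false]);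
   (Q2, [:: true; false; true; false])] se IH _ _)).
- by move=> qb; rewrite !inE => /or3P[] /eqP -> ; apply: (condQ (k := size ps)).
- move=> F dF sF.
  have hc := maxc se uQ1 ups psS psQ1 dP hn1 dF sF.
  have b1 := bad3 (dissSd dF) exv exv' vv'.
  have b2 := bad3 (dissSd dF) exv exw vw.
  have b3 := bad3 (dissSd dF) exv' exw v'w.
  move: hc b1 b2 b3; rewrite /=.
  by case: (x \in F); case: (v \in F); case: (v' \in F); case: (w \in F).
rewrite !big_cons big_nil.
have d1 : dg e S v = 1 by rewrite /dg hv cards1.
have d2 : dg e S v' = 1 by rewrite /dg hv' cards1.
have d3 : dg e S x = 3 by rewrite /dg hx cards3.
have d4 : dg e S w <= 3 by apply: dg_le3.
have m1 : dg e S v <= dg e [set:: Q1] v by apply: dg_nb; rewrite hv sub1set !inE eqxx.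
have m2 : dg e S v' <= dg e [set:: Q1] v' by apply: dg_nb; rewrite hv' sub1set !inE eqxx.
have m3 : #|[set v; v']| <= dg e [set:: Q1] x.
  by apply: dg_ge => u; rewrite !inE => /orP[] /eqP ->; rewrite !eqxx ?orbT.
have n1 : dg e S v <= dg e [set:: Q2] v by apply: dg_nb; rewrite hv sub1set !inE eqxx.
have n2 : dg e S v' <= dg e [set:: Q2] v' by apply: dg_nb; rewrite hv' sub1set !inE eqxx.
have n3 : dg e S x <= dg e [set:: Q2] x.
  by apply: dg_nb; rewrite hx !subUset !sub1set !inE !eqxx !orbT.
have n4 : #|[set x]| <= dg e [set:: Q2] w.
  by apply: dg_ge => u; rewrite !inE => /eqP ->; rewrite eqxx se.
rewrite cards2 vv' in m3; rewrite cards1 in n4.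
apply: fin_c; rewrite /dfc /= MM_seq // !big_cons !big_nil /=;
  move: d1 d2 d3 d4 m1 m2 m3 n1 n2 n3 n4; finl.
Qed.

Lemma case3 (T : finType) (e : rel T) (S : {set T}) w x v p :
  symmetric e -> irreflexive e -> (forall y, #|[set u | e y u]| <= 3) -> IHP e S ->
  nb e S v = [set x] -> nb e S x = [set v; w] -> nb e S w = [set x; p] ->
  v != w -> x != p ->
  ((PhiS e S)%:R <= BB (mu e S))%R.
Proof.
move=> se ie cub IH hv hx hw vw xp.
have xS := in_nb hv (set11 x).
have vS : v \in S by apply: (in_nb hx); rewrite !inE eqxx.
have wS : w \in S by apply: (in_nb hx); rewrite !inE eqxx !orbT.
have pS : p \in S by apply: (in_nb hw); rewrite !inE eqxx !orbT.
have exv : e x v by apply: (adj_nb hx); rewrite !inE eqxx.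
have exw : e x w by apply: (adj_nb hx); rewrite !inE eqxx !orbT.
have ewx : e w x by rewrite se.
have ewp : e w p by apply: (adj_nb hw); rewrite !inE eqxx !orbT.
have xv := adj_neq ie exv; have xw := adj_neq ie exw; have wp := adj_neq ie ewp.
have vp : v != p.
  apply/eqP => evp; move: ewp; rewrite -evp => ewv.
  have : w \in [set x] by rewrite (nbE _ hv) wS se.
  by rewrite inE eq_sym (negbTE xw).
set Q1 := [:: w; x; v]; set Q2 := [:: x; v]; set Q3 := [:: w; x; v; p].
set ps1 := [:: x; v]; set ps2 := [:: v].
have ups1 : uniq ps1 by rewrite /= inE xv.
have ups2 : uniq ps2 by [].
have uQ1 : uniq Q1 by rewrite /= !inE negb_or eq_sym xw eq_sym vw xv.
have uQ2 : uniq Q2 by rewrite /= !inE xv.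
have uQ3 : uniq Q3 by rewrite /= !inE !negb_or eq_sym xw eq_sym vw wp xv xp vp.
have Q1S : all (fun y => y \in S) Q1 by rewrite /= xS vS wS.
have Q2S : all (fun y => y \in S) Q2 by rewrite /= xS vS.
have Q3S : all (fun y => y \in S) Q3 by rewrite /= xS vS wS pS.
have ps1S : all (fun y => y \in S) ps1 by rewrite /= xS vS.
have ps2S : all (fun y => y \in S) ps2 by rewrite /= vS.
have p1Q1 : all (fun y => y \in Q1) ps1 by rewrite /= !inE !eqxx !orbT.
have p2Q2 : all (fun y => y \in Q2) ps2 by rewrite /= !inE !eqxx !orbT.
have p1Q3 : all (fun y => y \in Q3) ps1 by rewrite /= !inE !eqxx !orbT.
have dP1 : dissociation e [set:: ps1] by apply: pair_diss.
have dP2 : dissociation e [set:: ps2] by apply: single_diss.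
have hn1 : all (fun a => nb e S a \subset [set:: Q1]) ps1.
  by rewrite /= hv hx !subUset !sub1set !inE !eqxx ?orbT.
have hn2 : all (fun a => nb e S a \subset [set:: Q2]) ps2.
  by rewrite /= hv !sub1set !inE !eqxx.
have hn3 : all (fun a => nb e S a \subset [set:: Q3]) ps1.
  by rewrite /= hv hx !subUset !sub1set !inE !eqxx ?orbT.
have hps1 := pbs se ups1 ps1S p1Q1 dP1 hn1.
have hps2 := pbs se ups2 ps2S p2Q2 dP2 hn2.
have hps3 := pbs se ups1 ps1S p1Q3 dP1 hn3.
apply: (le_trans (@engine _ e S [:: (Q1, [:: false; true; true]); (Q2, [:: false; true]);
   (Q3, [:: true; true; false; false])] se IH _ _)).
- move=> qb; rewrite !inE => /or3P[] /eqP -> .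
  + by apply: (condQ (k := size ps1)).
  + by apply: (condQ (k := size ps2)).
  + by apply: (condQ (k := size ps1)).
- move=> F dF sF.
  have hc := maxc se uQ1 ups1 ps1S p1Q1 dP1 hn1 dF sF.
  have b1 := bad3 (dissSd dF) exv exw vw.
  have b2 := bad3 (dissSd dF) ewx ewp xp.
  move: hc b1 b2; rewrite /=.
  by case: (w \in F); case: (x \in F); case: (v \in F); case: (p \in F).
rewrite !big_cons big_nil.
have d1 : dg e S v = 1 by rewrite /dg hv cards1.
have d2 : dg e S x = 2 by rewrite /dg hx cards2 vw.
have d3 : dg e S w = 2 by rewrite /dg hw cards2 xp.
have d4 : dg e S p <= 3 by apply: dg_le3.
have a1 : #|[set x]| <= dg e [set:: Q1] w.
  by apply: dg_ge => u; rewrite !inE => /eqP ->; rewrite !eqxx ?orbT.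
have a2 : dg e S x <= dg e [set:: Q1] x.
  by apply: dg_nb; rewrite hx !subUset !sub1set !inE !eqxx ?orbT.
have a3 : dg e S v <= dg e [set:: Q1] v by apply: dg_nb; rewrite hv sub1set !inE eqxx ?orbT.
have b1 : #|[set v]| <= dg e [set:: Q2] x.
  by apply: dg_ge => u; rewrite !inE => /eqP ->; rewrite !eqxx ?orbT.
have b2 : dg e S v <= dg e [set:: Q2] v by apply: dg_nb; rewrite hv sub1set !inE eqxx ?orbT.
have c1 : dg e S w <= dg e [set:: Q3] w.
  by apply: dg_nb; rewrite hw !subUset !sub1set !inE !eqxx ?orbT.
have c2 : dg e S x <= dg e [set:: Q3] x.
  by apply: dg_nb; rewrite hx !subUset !sub1set !inE !eqxx ?orbT.
have c3 : dg e S v <= dg e [set:: Q3] v by apply: dg_nb; rewrite hv sub1set !inE eqxx ?orbT.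
have c4 : #|[set w]| <= dg e [set:: Q3] p.
  by apply: dg_ge => u; rewrite !inE => /eqP ->; rewrite !eqxx se ewp.
rewrite !cards1 in a1 b1 c4.
apply: fin_b; rewrite /dfc /= MM_seq // !big_cons !big_nil /=;
  move: d1 d2 d3 d4 a1 a2 a3 b1 b2 c1 c2 c3 c4; finl.
Qed.

Lemma case4 (T : finType) (e : rel T) (S : {set T}) w x v l p :
  symmetric e -> irreflexive e -> (forall y, #|[set u | e y u]| <= 3) -> IHP e S ->
  nb e S v = [set x] -> nb e S x = [set v; w] -> nb e S l = [set w] ->
  nb e S w = [set x; l; p] -> x != l -> x != p -> l != p ->
  ((PhiS e S)%:R <= BB (mu e S))%R.
Proof.
move=> se ie cub IH hv hx hl hw xl xp lp.
have xS := in_nb hv (set11 x).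
have wS := in_nb hl (set11 w).
have vS : v \in S by apply: (in_nb hx); rewrite !inE eqxx.
have lS : l \in S by apply: (in_nb hw); rewrite !inE eqxx !orbT.
have pS : p \in S by apply: (in_nb hw); rewrite !inE eqxx !orbT.
have exv : e x v by apply: (adj_nb hx); rewrite !inE eqxx.
have exw : e x w by apply: (adj_nb hx); rewrite !inE eqxx !orbT.
have ewx : e w x by rewrite se.
have ewl : e w l by apply: (adj_nb hw); rewrite !inE eqxx !orbT.
have ewp : e w p by apply: (adj_nb hw); rewrite !inE eqxx !orbT.
have xv := adj_neq ie exv; have xw := adj_neq ie exw.
have wl := adj_neq ie ewl; have wp := adj_neq ie ewp.
have vw : v != w.
  apply/eqP => evw; have : l \in nb e S w by rewrite hw !inE eqxx !orbT.
  by rewrite -evw hv inE eq_sym (negbTE xl).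
have vl : v != l.
  apply/eqP => evl; have : x \in nb e S l by rewrite inE xS -evl se.
  by rewrite hl inE (negbTE xw).
have vp : v != p.
  apply/eqP => evp; have : w \in nb e S v by rewrite inE wS evp se.
  by rewrite hv inE eq_sym (negbTE xw).
set Q1 := [:: w; x; v; l]; set Q2 := [:: w; x; v; l; p]; set ps := [:: x; v; l].
have ups : uniq ps by rewrite /= !inE negb_or xv xl vl.
have uQ1 : uniq Q1 by rewrite /= !inE !negb_or eq_sym xw eq_sym vw wl xv xl vl.
have uQ2 : uniq Q2 by rewrite /= !inE !negb_or eq_sym xw eq_sym vw wl wp xv xl xp vl vp lp.
have Q1S : all (fun y => y \in S) Q1 by rewrite /= xS vS wS lS.
have Q2S : all (fun y => y \in S) Q2 by rewrite /= xS vS wS lS pS.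
have psS : all (fun y => y \in S) ps by rewrite /= xS vS lS.
have pQ1 : all (fun y => y \in Q1) ps by rewrite /= !inE !eqxx !orbT.
have pQ2 : all (fun y => y \in Q2) ps by rewrite /= !inE !eqxx !orbT.
have dP : dissociation e [set:: ps].
  rewrite (setseq_cat [:: x; v] [:: l]); apply: diss_union => //.
  - exact: pair_diss.
  - exact: single_diss.
  move=> a b; rewrite !inE => /eqP -> /orP[] /eqP -> ; apply: no_edge hl _ _;
    rewrite ?xS ?vS ?inE // eq_sym //.
have hn1 : all (fun a => nb e S a \subset [set:: Q1]) ps.
  by rewrite /= hv hx hl !subUset !sub1set !inE !eqxx ?orbT.
have hn2 : all (fun a => nb e S a \subset [set:: Q2]) ps.
  by rewrite /= hv hx hl !subUset !sub1set !inE !eqxx ?orbT.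
have hps1 := pbs se ups psS pQ1 dP hn1.
have hps2 := pbs se ups psS pQ2 dP hn2.
apply: (le_trans (@engine _ e S [:: (Q1, [:: false; true; true; true]);
   (Q2, [:: true; false; true; true; false])] se IH _ _)).
- move=> qb; rewrite !inE => /orP[] /eqP -> .
  + by apply: (condQ (k := size ps)).
  + by apply: (condQ (k := size ps)).
- move=> F dF sF.
  have hc := maxc se uQ1 ups psS pQ1 dP hn1 dF sF.
  have b1 := bad3 (dissSd dF) exv exw vw.
  have b2 := bad3 (dissSd dF) ewx ewl xl.
  have b3 := bad3 (dissSd dF) ewl ewp lp.
  move: hc b1 b2 b3; rewrite /=.
  by case: (w \in F); case: (x \in F); case: (v \in F); case: (l \in F); case: (p \in F).
rewrite !big_cons big_nil.
have d1 : dg e S v = 1 by rewrite /dg hv cards1.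
have d2 : dg e S x = 2 by rewrite /dg hx cards2 vw.
have d3 : dg e S l = 1 by rewrite /dg hl cards1.
have d4 : dg e S w = 3 by rewrite /dg hw cards3.
have d5 : dg e S p <= 3 by apply: dg_le3.
have a1 : #|[set x; l]| <= dg e [set:: Q1] w.
  by apply: dg_ge => u; rewrite !inE => /orP[] /eqP ->; rewrite !eqxx ?orbT ?ewx ?ewl.
have a2 : dg e S x <= dg e [set:: Q1] x.
  by apply: dg_nb; rewrite hx !subUset !sub1set !inE !eqxx ?orbT.
have a3 : dg e S v <= dg e [set:: Q1] v by apply: dg_nb; rewrite hv sub1set !inE eqxx ?orbT.
have a4 : dg e S l <= dg e [set:: Q1] l by apply: dg_nb; rewrite hl sub1set !inE eqxx ?orbT.
have c1 : dg e S w <= dg e [set:: Q2] w.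
  by apply: dg_nb; rewrite hw !subUset !sub1set !inE !eqxx ?orbT.
have c2 : dg e S x <= dg e [set:: Q2] x.
  by apply: dg_nb; rewrite hx !subUset !sub1set !inE !eqxx ?orbT.
have c3 : dg e S v <= dg e [set:: Q2] v by apply: dg_nb; rewrite hv sub1set !inE eqxx ?orbT.
have c4 : dg e S l <= dg e [set:: Q2] l by apply: dg_nb; rewrite hl sub1set !inE eqxx ?orbT.
have c5 : #|[set w]| <= dg e [set:: Q2] p.
  by apply: dg_ge => u; rewrite !inE => /eqP ->; rewrite !eqxx se ewp.
rewrite cards1 in c5; rewrite cards2 xl in a1.
apply: fin_a; rewrite /dfc /= MM_seq // !big_cons !big_nil /=;
  move: d1 d2 d3 d4 d5 a1 a2 a3 a4 c1 c2 c3 c4 c5; finl.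
Qed.

Ltac neqs := rewrite /= ?inE ?negb_or; repeat (apply/andP; split); try done; try (rewrite eq_sym; done).

Lemma case5 (T : finType) (e : rel T) (S : {set T}) w x1 v1 x2 v2 p :
  symmetric e -> irreflexive e -> IHP e S ->
  nb e S v1 = [set x1] -> nb e S x1 = [set v1; w] ->
  nb e S v2 = [set x2] -> nb e S x2 = [set v2; w] ->
  nb e S w = [set x1; x2; p] -> x1 != x2 ->
  ((PhiS e S)%:R <= BB (mu e S))%R.
Proof.
move=> se ie IH hv1 hx1 hv2 hx2 hw x1x2.
have x1S := in_nb hv1 (set11 x1); have x2S := in_nb hv2 (set11 x2).
have v1S : v1 \in S by apply: (in_nb hx1); rewrite !inE eqxx.
have v2S : v2 \in S by apply: (in_nb hx2); rewrite !inE eqxx.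
have wS : w \in S by apply: (in_nb hx1); rewrite !inE eqxx ?orbT.
have ex1v1 : e x1 v1 by apply: (adj_nb hx1); rewrite !inE eqxx.
have ex1w : e x1 w by apply: (adj_nb hx1); rewrite !inE eqxx ?orbT.
have ex2v2 : e x2 v2 by apply: (adj_nb hx2); rewrite !inE eqxx.
have ex2w : e x2 w by apply: (adj_nb hx2); rewrite !inE eqxx ?orbT.
have ewx1 : e w x1 by rewrite se.
have ewx2 : e w x2 by rewrite se.
have x1v1 := adj_neq ie ex1v1; have x1w := adj_neq ie ex1w.
have x2v2 := adj_neq ie ex2v2; have x2w := adj_neq ie ex2w.
have wv1 : w != v1.
  apply/eqP => ew; have : x2 \in nb e S w by rewrite hw !inE eqxx ?orbT.
  by rewrite ew hv1 inE eq_sym (negbTE x1x2).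
have wv2 : w != v2.
  apply/eqP => ew; have : x1 \in nb e S w by rewrite hw !inE eqxx ?orbT.
  by rewrite ew hv2 inE (negbTE x1x2).
have x1v2 : x1 != v2.
  apply/eqP => ex; have : w \in nb e S x1 by rewrite hx1 !inE eqxx ?orbT.
  by rewrite ex hv2 inE eq_sym (negbTE x2w).
have v1x2 : v1 != x2.
  apply/eqP => ex; have : w \in nb e S x2 by rewrite hx2 !inE eqxx ?orbT.
  by rewrite -ex hv1 inE eq_sym (negbTE x1w).
have v1v2 : v1 != v2.
  apply/eqP => ex; have : x1 \in nb e S v1 by rewrite hv1 !inE eqxx.
  by rewrite ex hv2 inE (negbTE x1x2).
have v1w : v1 != w by rewrite eq_sym.
have v2w : v2 != w by rewrite eq_sym.
set Q := [:: w; x1; v1; x2; v2]; set ps := [:: x1; v1; x2; v2].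
have ups : uniq ps by neqs.
have uQ : uniq Q by neqs.
have QS : all (fun y => y \in S) Q by rewrite /= wS x1S v1S x2S v2S.
have psS : all (fun y => y \in S) ps by rewrite /= x1S v1S x2S v2S.
have pQ : all (fun y => y \in Q) ps by rewrite /= !inE !eqxx ?orbT.
have dP : dissociation e [set:: ps].
  rewrite (setseq_cat [:: x1; v1] [:: x2; v2]); apply: diss_union => //.
  - exact: pair_diss.
  - exact: pair_diss.
  move=> a b; rewrite !inE => /orP[] /eqP -> /orP[] /eqP -> .
  + by apply: no_edge hx2 _ _; neqs.
  + by apply: no_edge hx2 _ _; neqs.
  + by apply: no_edge hv2 _ _; neqs.
  + by apply: no_edge hv2 _ _; neqs.
have hn : all (fun a => nb e S a \subset [set:: Q]) ps.
  by rewrite /= hv1 hx1 hv2 hx2 !subUset !sub1set !inE !eqxx ?orbT.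
have hps := pbs se ups psS pQ dP hn.
apply: (le_trans (@engine _ e S [:: (Q, [:: false; true; true; true; true])] se IH _ _)).
- move=> qb; rewrite !inE => /eqP -> .
  by apply: (condQ (k := size ps)).
- move=> F dF sF.
  have hc := maxc se uQ ups psS pQ dP hn dF sF.
  have b1 := bad3 (dissSd dF) ewx1 ewx2 x1x2.
  have b2 := bad3 (dissSd dF) ex1v1 ex1w v1w.
  have b3 := bad3 (dissSd dF) ex2v2 ex2w v2w.
  move: hc b1 b2 b3; rewrite /=.
  by case: (w \in F); case: (x1 \in F); case: (v1 \in F); case: (x2 \in F); case: (v2 \in F).
rewrite !big_cons big_nil.
have d1 : dg e S v1 = 1 by rewrite /dg hv1 cards1.
have d2 : dg e S x1 = 2 by rewrite /dg hx1 cards2 v1w.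
have d3 : dg e S v2 = 1 by rewrite /dg hv2 cards1.
have d4 : dg e S x2 = 2 by rewrite /dg hx2 cards2 v2w.
have d5 : dg e S w <= 3 by rewrite /dg hw cards3_le.
have a1 : #|[set x1; x2]| <= dg e [set:: Q] w.
  by apply: dg_ge => u; rewrite !inE => /orP[] /eqP ->; rewrite !eqxx ?orbT ?ewx1 ?ewx2.
have a2 : dg e S x1 <= dg e [set:: Q] x1.
  by apply: dg_nb; rewrite hx1 !subUset !sub1set !inE !eqxx ?orbT.
have a3 : dg e S v1 <= dg e [set:: Q] v1 by apply: dg_nb; rewrite hv1 sub1set !inE eqxx ?orbT.
have a4 : dg e S x2 <= dg e [set:: Q] x2.
  by apply: dg_nb; rewrite hx2 !subUset !sub1set !inE !eqxx ?orbT.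
have a5 : dg e S v2 <= dg e [set:: Q] v2 by apply: dg_nb; rewrite hv2 sub1set !inE eqxx ?orbT.
rewrite cards2 x1x2 in a1.
apply: fin_1; rewrite /dfc /= MM_seq // !big_cons !big_nil /=;
  move: d1 d2 d3 d4 d5 a1 a2 a3 a4 a5; finl.
Qed.

Lemma card1_eq (T : finType) (A : {set T}) a : #|A| = 1 -> a \in A -> A = [set a].
Proof.
move=> /eqP /cards1P [x ->]; rewrite inE => /eqP ->; by [].
Qed.

Lemma card2_eq (T : finType) (A : {set T}) a b :
  #|A| = 2 -> a \in A -> b \in A -> a != b -> A = [set a; b].
Proof.
move=> cA aA bA ab; apply/eqP; rewrite eq_sym eqEcard cards2 ab cA leqnn andbT.
by apply/subsetP => u; rewrite !inE => /orP[] /eqP ->.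
Qed.

Lemma card3_ex (T : finType) (A : {set T}) a b :
  #|A| = 3 -> a \in A -> b \in A -> a != b ->
  exists c, [/\ A = [set a; b; c], a != c & b != c].
Proof.
move=> cA aA bA ab.
have sub : [set a; b] \subset A by apply/subsetP => u; rewrite !inE => /orP[] /eqP ->.
have c1 : #|A :\: [set a; b]| = 1.
  have := cardsID [set a; b] A; rewrite (setIidPr sub) cards2 ab cA; lia.
have [c hc] := cards1P (introT eqP c1).
have cA' : c \in A :\: [set a; b] by rewrite hc set11.
move: (cA'); rewrite !inE negb_or => /andP[/andP[ca cb] cAA].
have ac : a != c by rewrite eq_sym.
have bc : b != c by rewrite eq_sym.
exists c; split => //.
apply/eqP; rewrite eq_sym eqEcard cards3 // cA leqnn andbT.
by apply/subsetP => u; rewrite !inE => /orP[/orP[]|] /eqP ->.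
Qed.

Lemma card_pick (T : finType) (A : {set T}) : 0 < #|A| -> exists a, a \in A.
Proof. by move=> /card_gt0P [a aA]; exists a. Qed.

Lemma card_pick2 (T : finType) (A : {set T}) a : 1 < #|A| -> exists2 b, b \in A & b != a.
Proof.
move=> h; have : 0 < #|A :\ a|.
  have := cardsD1 a A; case: (a \in A) => /=; lia.
move=> /card_gt0P [b]; rewrite !inE => /andP[ba bA]; by exists b.
Qed.

Definition leaves (T : finType) (e : rel T) (S : {set T}) := locked [set v in S | dg e S v <= 1].

Lemma inL (T : finType) (e : rel T) (S : {set T}) v :
  (v \in leaves e S) = (v \in S) && (dg e S v <= 1).
Proof. by rewrite /leaves -lock inE. Qed.

Lemma leaf_nb (T : finType) (e : rel T) (S : {set T}) v y :
  v \in leaves e S -> y \in S -> e v y -> nb e S v = [set y].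
Proof.
rewrite inL => /andP[_ d1] yS evy; apply: card1_eq; last by rewrite inE yS evy.
have : 0 < #|nb e S v| by apply/card_gt0P; exists y; rewrite inE yS evy.
move: d1; rewrite /dg; lia.
Qed.

Ltac clia := repeat match goal with H : _ |- _ => clear H end; lia.

Lemma nb_sub (T : finType) (e : rel T) (S : {set T}) y : nb e S y \subset S.
Proof. by apply/subsetP => u; rewrite inE => /andP[]. Qed.

Lemma step4 (T : finType) (e : rel T) (S : {set T}) y :
  symmetric e -> irreflexive e -> (forall y, #|[set u | e y u]| <= 3) -> IHP e S ->
  (forall v, v \in S -> 0 < dg e S v) ->
  y \in S :\: leaves e S -> dg e (S :\: leaves e S) y <= 1 ->
  ((PhiS e S)%:R <= BB (mu e S))%R \/
  exists v w, [/\ nb e S y = [set v; w], nb e S v = [set y], w \in S :\: leaves e S,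
     dg e S w = 3 & nb e S w \subset S :\: leaves e S].
Proof.
move=> se ie cub IH pos yL dy1.
have yS : y \in S by move: yL; rewrite inE => /andP[].
have yNL : y \notin leaves e S by move: yL; rewrite inE => /andP[].
have dy2 : 2 <= dg e S y by move: yNL; rewrite inL yS /= -ltnNge.
have dy3 : dg e S y <= 3 by apply: dg_le3.
have hsp := dg_split e S (leaves e S) y.
have NLp : forall u, u \in nb e (S :&: leaves e S) y ->
    [/\ u \in S, u \in leaves e S, e y u & nb e S u = [set y]].
  move=> u; rewrite !inE => /andP[/andP[uS uL] eyu]; split => //.
  by apply: leaf_nb => //; rewrite se.
have [two|one] := leqP 2 (dg e (S :&: leaves e S) y).
  have [v vN] : exists v, v \in nb e (S :&: leaves e S) y.
    by apply: card_pick; rewrite -/(dg _ _ _); move: two; clia.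
  have [v' v'N v'v] := card_pick2 v two.
  have [vS vL eyv hv] := NLp v vN.
  have [v'S v'L eyv' hv'] := NLp v' v'N.
  have vv' : v != v' by rewrite eq_sym.
  have vy : v \in nb e S y by rewrite inE vS eyv.
  have v'y : v' \in nb e S y by rewrite inE v'S eyv'.
  left.
  have [d2|d3] : dg e S y = 2 \/ dg e S y = 3 by move: dy2 dy3; clia.
    by apply: (case2a se ie IH hv hv' _ vv'); apply: card2_eq.
  have [w [hy vw v'w]] := card3_ex d3 vy v'y vv'.
  exact: (case2b se ie cub IH hv hv' hy vv' vw v'w).
have c1 : dg e (S :&: leaves e S) y = 1.
  have : 0 < dg e (S :&: leaves e S) y by move: hsp dy1 dy2; clia.
  by move: one; clia.
have dSy : dg e S y = 2 by move: hsp dy1 dy2 c1; clia.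
have dS1y : dg e (S :\: leaves e S) y = 1 by move: hsp c1 dSy; clia.
have [v vN] : exists v, v \in nb e (S :&: leaves e S) y by apply: card_pick; rewrite -/(dg _ _ _) c1.
have [w wN] : exists w, w \in nb e (S :\: leaves e S) y by apply: card_pick; rewrite -/(dg _ _ _) dS1y.
have [vS vL eyv hv] := NLp v vN.
move: wN; rewrite inE => /andP[wL eyw].
have wS : w \in S by move: wL; rewrite inE => /andP[].
have wNL : w \notin leaves e S by move: wL; rewrite inE => /andP[].
have vw : v != w by apply/eqP => h; move: vL; rewrite h (negbTE wNL).
have hy : nb e S y = [set v; w] by apply: card2_eq; rewrite // inE ?vS ?wS ?eyv ?eyw.
have dw2 : 2 <= dg e S w by move: wNL; rewrite inL wS /= -ltnNge.
have dw3 : dg e S w <= 3 by apply: dg_le3.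
have yw : y \in nb e S w by rewrite inE yS se.
have [d2|d3] : dg e S w = 2 \/ dg e S w = 3 by move: dw2 dw3; clia.
  left.
  have h1 : 1 < #|nb e S w| by rewrite -/(dg _ _ _) d2.
  have [p pN py] := card_pick2 y h1.
  have yp : y != p by rewrite eq_sym.
  have hw : nb e S w = [set y; p] by apply: card2_eq.
  exact: (case3 se ie cub IH hv hy hw vw yp).
case: (boolP [exists l in nb e S w, l \in leaves e S]) => [/existsP [l /andP[lN lL]] | noL].
  have ly : y != l by apply/eqP => h; move: lL; rewrite -h (negbTE yNL).
  have [p [hw yp lp]] := card3_ex d3 yw lN ly.
  have lS : l \in S by move: lN; rewrite inE => /andP[].
  have ewl : e w l by move: lN; rewrite inE => /andP[].
  have hl : nb e S l = [set w] by apply: leaf_nb => //; rewrite se.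
  left; exact: (case4 se ie cub IH hv hy hl hw ly yp lp).
right; exists v, w; split => //.
apply/subsetP => u uN; rewrite inE; apply/andP; split; last by move: uN; rewrite inE => /andP[].
apply/negP => uL; move/negP: noL; apply; apply/existsP; exists u; by rewrite uN uL.
Qed.


Lemma same_w (T : finType) (e : rel T) (S : {set T}) y z v w :
  nb e S y = [set v; w] -> nb e S v = [set y] -> z \in S -> e y z ->
  z \notin leaves e S -> z = w.
Proof.
move=> hy hv zS eyz zL.
have vS : v \in S by apply: (in_nb hy); rewrite !inE eqxx.
have vL : v \in leaves e S by rewrite inL vS /dg hv cards1.
have : z \in [set v; w] by rewrite -hy inE zS eyz.
rewrite !inE => /orP[/eqP h|/eqP //]; by move: zL; rewrite h vL.
Qed.

Lemma nb_restrict (T : finType) (e : rel T) (S B : {set T}) w :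
  nb e S w \subset B -> B \subset S -> nb e B w = nb e S w.
Proof.
move=> h BS; apply/setP => u; rewrite !inE.
case eu: (e w u); rewrite ?andbF // !andbT.
apply/idP/idP => [/(subsetP BS) //|uS].
by apply: (subsetP h); rewrite inE uS eu.
Qed.

Lemma step (T : finType) (e : rel T) (S : {set T}) :
  symmetric e -> irreflexive e -> (forall y, #|[set u | e y u]| <= 3) ->
  (forall A : {set T}, A != set0 -> exists2 v, v \in A & dg e A v <= 1) ->
  IHP e S -> S != set0 -> ((PhiS e S)%:R <= BB (mu e S))%R.
Proof.
move=> se ie cub spH IH Sn.
case: (boolP [exists v in S, dg e S v == 0]) => [/existsP[v /andP[vS /eqP d0]] | no0].
  apply: (case0 se ie IH vS); apply/eqP; rewrite -cards_eq0; exact/eqP.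
have pos : forall v, v \in S -> 0 < dg e S v.
  move=> v vS; rewrite lt0n; apply/negP => h; move/negP: no0; apply.
  by apply/existsP; exists v; rewrite vS h.
case: (boolP [exists u in S, exists v in S, [&& e u v, dg e S u == 1 & dg e S v == 1]])
  => [/existsP[u /andP[uS /existsP[v /andP[vS /and3P[euv /eqP du /eqP dv]]]]] | no1].
  have hu : nb e S u = [set v] by apply: card1_eq => //; rewrite inE vS euv.
  have hv : nb e S v = [set u] by apply: card1_eq => //; rewrite inE uS se.
  exact: (case1 se ie IH hu hv).
have S1n : S :\: leaves e S != set0.
  have [v0 v0S] := set0Pn _ Sn.
  apply/set0Pn; case: (boolP (v0 \in leaves e S)) => v0L; last by exists v0; rewrite inE v0L.
  have d1 : dg e S v0 = 1 by move: v0L (pos _ v0S); rewrite inL v0S /= => h1 h2; move: h1 h2; clia.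
  have [u uN] : exists u, u \in nb e S v0 by apply: card_pick; rewrite -/(dg _ _ _) d1.
  move: uN; rewrite inE => /andP[uS ev0u].
  exists u; rewrite inE uS andbT; apply/negP => uL.
  have du : dg e S u = 1 by move: uL (pos _ uS); rewrite inL uS /= => h1 h2; move: h1 h2; clia.
  move/negP: no1; apply; apply/existsP; exists v0; rewrite v0S; apply/existsP; exists u.
  by rewrite uS ev0u d1 du.
have [y yS1 dy] := spH _ S1n.
case: (step4 se ie cub IH pos yS1 dy) => [//|[v [w [hy hv wS1 dw3 wsub]]]].
have S1S : S :\: leaves e S \subset S by apply: subsetDl.
pose L2 := [set y in S :\: leaves e S | dg e (S :\: leaves e S) y <= 1].
have S2n : (S :\: leaves e S) :\: L2 != set0.
  apply/set0Pn; exists w; rewrite in_setD wS1 andbT /L2 in_set negb_and wS1 /=.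
  by rewrite /dg (nb_restrict wsub S1S) -/(dg _ _ _) dw3.
have [z zS2 dz] := spH _ S2n.
move: (zS2); rewrite in_setD /L2 in_set negb_and => /andP[/orP[] zS1' zS1]; first by rewrite zS1 in zS1'.
have dz2 : 2 <= dg e (S :\: leaves e S) z by rewrite ltnNge.
have zS : z \in S by move: zS1; rewrite in_setD => /andP[].
have zNL : z \notin leaves e S by move: zS1; rewrite in_setD => /andP[].
have hsp := dg_split e (S :\: leaves e S) L2 z.
have [y1 y1N] : exists y1, y1 \in nb e ((S :\: leaves e S) :&: L2) z.
  by apply: card_pick; rewrite -/(dg _ _ _); move: hsp dz dz2; clia.
have y1P : forall y', y' \in nb e ((S :\: leaves e S) :&: L2) z ->
   [/\ y' \in S :\: leaves e S, dg e (S :\: leaves e S) y' <= 1, y' \in S & e y' z].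
  move=> y'; rewrite in_set in_setI => /andP[/andP[y'S1 y'L2] ezy'].
  move: y'L2; rewrite /L2 in_set => /andP[_ dy'].
  split => //; first by move: y'S1; rewrite in_setD => /andP[].
  by rewrite se.
have [y1S1 dy1 y1S ey1z] := y1P y1 y1N.
case: (step4 se ie cub IH pos y1S1 dy1) => [//|[v1 [w1 [hy1 hv1 w1S1 dw1 w1sub]]]].
have zw1 : z = w1 by apply: (same_w hy1 hv1 zS ey1z zNL).
move: hy1 dw1 w1sub; rewrite -zw1 => hy1 dw1 w1sub.
have dS1z : dg e (S :\: leaves e S) z = 3 by rewrite /dg (nb_restrict w1sub S1S) -/(dg _ _ _) dw1.
have two : 1 < dg e ((S :\: leaves e S) :&: L2) z by move: hsp dS1z dz; clia.
have [y2 y2N y2y1] := card_pick2 y1 two.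
have [y2S1 dy2 y2S ey2z] := y1P y2 y2N.
case: (step4 se ie cub IH pos y2S1 dy2) => [//|[v2 [w2 [hy2 hv2 w2S1 dw2 w2sub]]]].
have zw2 : z = w2 by apply: (same_w hy2 hv2 zS ey2z zNL).
move: hy2; rewrite -zw2 => hy2.
have y1z : y1 \in nb e S z by rewrite inE y1S se.
have y2z : y2 \in nb e S z by rewrite inE y2S se.
have y1y2 : y1 != y2 by rewrite eq_sym.
have [p [hz _ _]] := card3_ex dw1 y1z y2z y1y2.
exact: (case5 se ie IH hv1 hy1 hv2 hy2 hz y1y2).
Qed.


Lemma cross (T : finType) (e : rel T) (A : {set T}) (p : seq T) x :
  x \in A -> path e x p -> last x p \notin A -> exists y z, [/\ y \in A, z \notin A & e y z].
Proof.
elim: p x => [|z p IHp] x xA /=; first by rewrite xA.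
move=> /andP[exz pz] lz; case zA: (z \in A); first exact: IHp pz lz.
by exists x, z; rewrite zA.
Qed.

Lemma grow (T : finType) (e : rel T) :
  symmetric e -> irreflexive e -> (forall x y, connect e x y) ->
  forall k (A : {set T}), A != set0 -> #|~: A| = k -> MM e A + 2 * k <= MM e setT.
Proof.
move=> se ie con; elim=> [|k IHk] A An cA.
  have h0 : ~: A = set0 by apply: cards0_eq.
  have -> : A = setT by rewrite -(setCK A) h0 setC0.
  by rewrite addn0.
have [a aA] := set0Pn _ An.
have [b bA] : exists b, b \in ~: A by apply: card_pick; rewrite cA.
have [q pq lq] := connectP (con a b).
have [y [z [yA zA eyz]]] : exists y z, [/\ y \in A, z \notin A & e y z].
  by apply: (cross aA pq); rewrite -lq; move: bA; rewrite inE.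
set A' := z |: A.
have A'n : A' != set0 by apply/set0Pn; exists z; rewrite !inE eqxx.
have cA' : #|~: A'| = k.
  have := cardsD1 z (~: A); rewrite inE zA /= cA => h.
  have -> : ~: A' = ~: A :\ z by apply/setP => u; rewrite !inE negb_or andbC.
  by move: h; clear; lia.
have hQ : [set z] \subset A' by rewrite sub1set !inE eqxx.
have hM := MM_split se hQ.
have E : A' :\: [set z] = A.
  by apply/setP => u; rewrite !inE; case: (eqVneq u z) => [->|] /=; rewrite ?(negbTE zA) ?andbT.
rewrite E in hM.
have M1 : MM e [set z] = 0.
  rewrite /MM big_set1 /dg; apply/eqP; rewrite cards_eq0; apply/eqP/setP => u.
  by rewrite !inE; case: (eqVneq u z) => [->|]; rewrite ?ie ?andbF.
have d1 : 1 <= dg e A' z.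
  apply/card_gt0P; exists y; rewrite !inE yA orbT /=; by rewrite se.
rewrite big_set1 M1 in hM.
have := IHk A' A'n cA'; move: hM d1; clia.
Qed.

Lemma card_sumT (T : finType) (P : pred T) : #|[set u | P u]| = \sum_u P u.
Proof.
rewrite -sum1_card big_mkcond [RHS]big_mkcond /=; apply: eq_bigr => u _.
by rewrite !inE; case: (P u).
Qed.

Lemma MM_total (T : finType) (e : rel T) :
  #|[set p : T * T | e p.1 p.2]| = MM e setT.
Proof.
rewrite (card_sumT (fun p : T * T => e p.1 p.2)) /MM.
rewrite -(pair_bigA _ (fun v u => nat_of_bool (e v u))) /=.
have -> : \sum_(v in [set: T]) dg e [set: T] v = \sum_v dg e [set: T] v.
  by apply: eq_bigl => v; rewrite inE.
apply: eq_bigr => v _; rewrite /dg /nb (@card_sumB _ [set: T] (e v)).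
by apply: eq_bigl => u; rewrite inE.
Qed.


Lemma MM_ge (T : finType) (e : rel T) (n : nat) :
  nedges e = n -> 2 * n <= MM e setT <= 2 * n + 1.
Proof.
rewrite /nedges MM_total => h.
have := divn_eq (MM e setT) 2; rewrite h => E.
have := ltn_pmod (MM e setT) (isT : 0 < 2).
move: E; clia.
Qed.

Lemma sparse (T : finType) (e : rel T) :
  symmetric e -> irreflexive e -> (forall x y, connect e x y) -> nedges e = #|T| - 1 ->
  forall A : {set T}, A != set0 -> exists2 v, v \in A & dg e A v <= 1.
Proof.
move=> se ie con ned A An.
have n0 : 0 < #|T| by have [a _] := set0Pn _ An; apply/card_gt0P; exists a.
have /andP[_ Mt] := MM_ge ned.
have g := grow se ie con An (erefl _).
have cC := cardsC A.
case: (boolP [exists v in A, dg e A v <= 1]) => [/existsP[v /andP[vA dv]]|no].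
  by exists v.
have : \sum_(v in A) 2 <= MM e A.
  apply: leq_sum => v vA; rewrite ltnNge; apply/negP => h; move/negP: no; apply.
  by apply/existsP; exists v; rewrite vA h.
rewrite sum_nat_const => h2.
have cA : 0 < #|A| by have [a aA] := set0Pn _ An; apply/card_gt0P; exists a.
move: n0 Mt g cC h2 cA; clia.
Qed.

Lemma psi0 (T : finType) (e : rel T) : psiS e set0 = 0.
Proof.
have [F /andP[FS _] <-] := psi_att e set0.
by move: FS; rewrite subset0 => /eqP ->; rewrite cards0.
Qed.

Lemma main (T : finType) (e : rel T) :
  symmetric e -> irreflexive e -> (forall y, #|[set u | e y u]| <= 3) ->
  (forall A : {set T}, A != set0 -> exists2 v, v \in A & dg e A v <= 1) ->
  forall S, ((PhiS e S)%:R <= BB (mu e S))%R.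
Proof.
move=> se ie cub spH S; have [n] := ubnP #|S|; elim: n S => // n IHn S hS.
have IH : IHP e S by move=> S' hS'; apply: IHn; move: hS hS'; clia.
case: (eqVneq S set0) => [->|Sn]; last exact: step.
have m0 : mu e set0 = 0.
  by rewrite /mu psi0 cards0 /MM big_set0.
have P1 : PhiS e set0 <= 1.
  rewrite /PhiS /cnt; apply: leq_trans (_ : #|[set (set0 : {set T})]| <= 1); last by rewrite cards1.
  apply: subset_leq_card; apply/subsetP => F; rewrite !inE => /andP[/andP[FS _] _].
  by move: FS; rewrite subset0.
rewrite m0 /BB expr0z.
by rewrite -(ler_nat rat) in P1.
Qed.

Local Open Scope ring_scope.

Theorem theorem3p2 (T : finType) (e : rel T) :
  is_tree e -> subcubic e ->
  (Phi e)%:R <= ((1466%:Q / 1000%:Q) ^ (4 * (#|T|)%:Z - 5 * (psi e)%:Z + 2))%R.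
Proof.
case=> [[se ie] [n0 [con ned]]] cub.
have spH := sparse se ie con ned.
have hm := main se ie cub spH setT.
have psi_eq : psi e = psiS e setT.
  by rewrite /psi /psiS; apply: eq_bigl => F; rewrite /dissS subsetT.
have Phi_eq : Phi e = PhiS e setT.
  by rewrite /Phi /PhiS /cnt psi_eq; apply: eq_card => F; rewrite !inE /dissS subsetT.
rewrite Phi_eq psi_eq; apply: le_trans hm _.
have /andP[Mt _] := MM_ge ned.
have hmu : (mu e setT <= 4 * (#|T|)%:Z - 5 * (psiS e setT)%:Z + 2)%R.
  rewrite /mu cardsT; move: Mt n0; clia.
apply: le_trans (BB_mono hmu) _.
rewrite /BB /cc -lock.
exact: lexx.
Qed.
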